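(* Let $\lambda$ be a nonzero real number and $D=\frac{d}{dx}$. For every integer $n\ge 0$ and every $x$ with $|\lambda x|<1$, $$\mathrm{bel}_{n,\lambda}(x)\,e_{\lambda}(x)=(xD)^{n}e_{\lambda}(x)=\sum_{k=0}^{\infty}\frac{(1)_{k,\lambda}}{k!}k^{n}x^{k}.$$
   Context: For nonzero $\lambda\in\mathbb{R}$, $e_{\lambda}(t)=(1+\lambda t)^{1/\lambda}$, and $(1)_{0,\lambda}=1$, $(1)_{k,\lambda}=1(1-\lambda)\cdots(1-(k-1)\lambda)$ for $k\ge1$, so that $e_\lambda(x)=\sum_{k\ge0}(1)_{k,\lambda}\frac{x^k}{k!}$. The degenerate Bell polynomials of the second kind $\mathrm{bel}_{n,\lambda}(x)$ are defined by $e_{\lambda}(xe^{t})\cdot e_{\lambda}(x)^{-1}=\sum_{n=0}^{\infty}\mathrm{bel}_{n,\lambda}(x)\frac{t^{n}}{n!}$. Here $(xD)^n$ denotes the $n$-fold application of the operator $f\mapsto x f'(x)$. *)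

(* Defs.v *)
From Stdlib Require Import Reals.
From Coquelicot Require Import Coquelicot.
Open Scope R_scope.

(* degenerate exponential e_lambda(t) = (1 + lambda t)^(1/lambda)
   (real power, meaningful for 1 + lambda t > 0) *)
Definition e_lam (lam t : R) : R := Rpower (1 + lam * t) (1 / lam).

Fixpoint fall_one (lam : R) (k : nat) : R :=
  match k with
  | O => 1
  | S m => fall_one lam m * (1 - INR m * lam)
  end.

(* degenerate Bell polynomial of the second kind: n!-times the t^n coefficient
   of the exponential generating function e_lam(x e^t) / e_lam(x), i.e. its
   n-th derivative in t at t = 0 *)
Definition bel (n : nat) (lam x : R) : R :=
  Derive_n (fun t => e_lam lam (x * exp t) / e_lam lam x) n 0.

Fixpoint xD_pow (n : nat) (f : R -> R) : R -> R :=
  match n with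
  | O => f
  | S m => fun y => y * Derive (xD_pow m f) y
  end.

(* Main.v *)
Require Import Defs.
From Stdlib Require Import Reals Lra Lia.
From Coquelicot Require Import Coquelicot.
Open Scope R_scope.

Lemma fall_pos L k : 0 <= L -> 0 < fall_one (-L) k.
Proof.
  intros HL; induction k as [|k IH]; simpl; [lra|].
  apply Rmult_lt_0_compat; auto. pose proof (pos_INR k). nra.
Qed.

Lemma fall_bound lam k : Rabs (fall_one lam k) <= fall_one (- Rabs lam) k.
Proof.
  induction k as [|k IH]; simpl.
  - rewrite Rabs_R1; lra.
  - rewrite Rabs_mult. apply Rmult_le_compat; try apply Rabs_pos; auto.
    pose proof (pos_INR k). pose proof (Rabs_pos lam).
    eapply Rle_trans; [apply Rabs_triang|]. rewrite Rabs_Ropp, Rabs_R1, Rabs_mult, (Rabs_right (INR k)) by lra. lra.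
Qed.

Lemma lim_ratio L r : 0 <= L -> is_lim_seq (fun n => r * ((1 + INR n * L) / INR (S n))) (r * L).
Proof.
  intros HL.
  replace (Finite (r * L)) with (Rbar_mult r L) by reflexivity.
  apply is_lim_seq_scal_l.
  apply is_lim_seq_ext with (fun n => L + (1 - L) * / INR (S n)).
  - intros n. rewrite S_INR. pose proof (pos_INR n). field. lra.
  - replace (Finite L) with (Rbar_plus L (Rbar_mult (1-L) 0)).
    2:{ simpl. f_equal. ring. }
    apply is_lim_seq_plus'. apply is_lim_seq_const.
    replace (Finite ((1-L)*0)) with (Rbar_mult (1-L) 0) by reflexivity.
    apply is_lim_seq_scal_l.
    replace (Finite 0) with (Rbar_inv p_infty) by reflexivity.
    apply is_lim_seq_inv.
    + apply (is_lim_seq_incr_1 INR). apply is_lim_seq_INR.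
    + discriminate.
Qed.

Definition acoef lam k := fall_one lam k / INR (Factorial.fact k).

Lemma fact_pos k : 0 < INR (Factorial.fact k).
Proof. apply lt_0_INR. apply Factorial.lt_O_fact. Qed.

Lemma radius lam y : lam <> 0 -> Rabs (lam * y) < 1 ->
  Rbar_lt (Rabs y) (CV_radius (acoef lam)).
Proof.
  intros Hl Hy.
  set (L := Rabs lam).
  assert (HL : 0 < L) by (apply Rabs_pos_lt; auto).
  rewrite Rabs_mult in Hy. fold L in Hy.
  assert (Hy' : Rabs y < / L).
  { apply (Rmult_lt_reg_l L); auto. rewrite Rinv_r by lra. lra. }
  set (r := (Rabs y + / L) / 2).
  assert (Hr : 0 < r) by (pose proof (Rabs_pos y); unfold r; lra).
  assert (Hrl : r < / L) by (unfold r; lra).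
  set (c := fun k => fall_one (- L) k / INR (Factorial.fact k)).
  assert (Hc : forall n, 0 < c n).
  { intros n; unfold c. apply Rdiv_lt_0_compat. apply fall_pos; lra. apply fact_pos. }
  assert (Hdisk : CV_disk c r).
  { apply CV_disk_DAlembert with L.
    - intros n; specialize (Hc n); lra.
    - apply is_lim_seq_ext with (fun n => 1 * ((1 + INR n * L) / INR (S n))).
      + intros n. unfold c. simpl fall_one. change (Factorial.fact (S n)) with (S n * Factorial.fact n)%nat; rewrite mult_INR.
        pose proof (fact_pos n). pose proof (fall_pos L n (Rlt_le _ _ HL)).
        rewrite S_INR. pose proof (pos_INR n).
        rewrite Rabs_right.
        * field. repeat split; lra.
        * apply Rle_ge. replace (fall_one (- L) n * (1 - INR n * - L) / ((INR n + 1) * INR (Factorial.fact n)) /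
           (fall_one (- L) n / INR (Factorial.fact n))) with (1 * ((1 + INR n * L) / (INR n + 1))).
          -- apply Rmult_le_pos; [lra|]. apply Rdiv_le_0_compat; nra.
          -- field. repeat split; lra.
      + replace (Finite L) with (Finite (1 * L)) by (f_equal; ring). apply lim_ratio; lra.
    - right. split; [lra|]. rewrite Rabs_right; lra. }
  assert (Hle : Rbar_le (mkposreal r Hr) (CV_radius (acoef lam))).
  { destruct Hdisk as [l Hl'].
    apply CV_radius_Reals_1.
    exists (fun n => Rabs (c n * r ^ n)). exists l. split.
    - apply is_series_Reals in Hl'. unfold infinite_sum in Hl'.
      eapply Un_cv_ext; [|exact Hl']. intros n. simpl.
      apply sum_eq. intros i _. rewrite Rabs_Rabsolu. reflexivity.
    - intros n z Hz. unfold Boule in Hz. simpl in Hz. rewrite Rminus_0_r in Hz.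
      unfold acoef, c. rewrite !Rabs_mult, !Rabs_div.
      2,3: apply Rgt_not_eq, fact_pos.
      rewrite <- !RPow_abs. rewrite (Rabs_right r) by lra.
      apply Rmult_le_compat; try apply pow_le; try apply Rabs_pos.
      + apply Rmult_le_pos; [apply Rabs_pos|]. apply Rlt_le, Rinv_0_lt_compat.
        apply Rabs_pos_lt, Rgt_not_eq, fact_pos.
      + apply Rmult_le_compat_r. apply Rlt_le, Rinv_0_lt_compat.
        apply Rabs_pos_lt, Rgt_not_eq, fact_pos.
        eapply Rle_trans; [apply fall_bound|]. apply Req_le, eq_sym, Rabs_right.
        apply Rle_ge, Rlt_le, fall_pos. apply Rlt_le, HL.
      + apply pow_incr. split; [apply Rabs_pos|]. apply Rlt_le, Hz. }
  destruct (CV_radius (acoef lam)) as [R0| |]; simpl in *; unfold r in *; try lra; tauto.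
Qed.

Definition bcoef lam n k := acoef lam k * INR k ^ n.

Lemma bcoef_S lam n k : bcoef lam (S n) k = PS_incr_1 (PS_derive (bcoef lam n)) k.
Proof.
  unfold bcoef, PS_derive. destruct k as [|m]; simpl.
  - change (@zero R_NormedModule) with 0. ring.
  - ring.
Qed.

Lemma radius_b lam n : CV_radius (bcoef lam n) = CV_radius (acoef lam).
Proof.
  induction n as [|n IH].
  - apply CV_radius_ext. intros k; unfold bcoef; simpl; ring.
  - rewrite (CV_radius_ext _ _ (bcoef_S lam n)), CV_radius_incr_1, CV_radius_derive. exact IH.
Qed.

Lemma PS_b_S lam n y : y * PSeries (PS_derive (bcoef lam n)) y = PSeries (bcoef lam (S n)) y.
Proof.
  rewrite <- PSeries_incr_1. apply PSeries_ext. intros k; symmetry; apply bcoef_S.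
Qed.

Lemma loc_disk lam y : Rabs (lam * y) < 1 -> locally y (fun t => Rabs (lam * t) < 1).
Proof.
  intros H.
  assert (Hp : 0 < (1 - Rabs (lam * y)) / (Rabs lam + 1)).
  { apply Rdiv_lt_0_compat. lra. pose proof (Rabs_pos lam). lra. }
  exists (mkposreal _ Hp). intros t Ht. simpl in Ht. unfold ball in Ht; simpl in Ht.
  unfold AbsRing_ball, abs, minus, plus, opp in Ht; simpl in Ht.
  replace (lam * t) with (lam * y + lam * (t - y)) by ring.
  eapply Rle_lt_trans; [apply Rabs_triang|]. rewrite (Rabs_mult lam (t - y)).
  pose proof (Rabs_pos lam). pose proof (Rabs_pos (t - y)).
  assert (Rabs lam * Rabs (t - y) <= (Rabs lam + 1) * Rabs (t - y)) by nra.
  assert ((Rabs lam + 1) * Rabs (t - y) < 1 - Rabs (lam * y)).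
  { apply (Rmult_lt_reg_r (/ (Rabs lam + 1))). apply Rinv_0_lt_compat; lra.
    replace ((Rabs lam + 1) * Rabs (t - y) * / (Rabs lam + 1)) with (Rabs (t - y)) by (field; lra).
    exact Ht. }
  lra.
Qed.

Lemma between_abs y z : Rmin 0 y <= z <= Rmax 0 y -> Rabs z <= Rabs y.
Proof.
  unfold Rmin, Rmax. intros H. destruct (Rle_dec 0 y);
  unfold Rabs; destruct (Rcase_abs z); destruct (Rcase_abs y); lra.
Qed.

Lemma disk_pos lam z : Rabs (lam * z) < 1 -> 0 < 1 + lam * z.
Proof. intros H. apply Rabs_def2 in H. lra. Qed.

Lemma disk_le lam y z : Rabs (lam * y) < 1 -> Rabs z <= Rabs y -> Rabs (lam * z) < 1.
Proof. intros H1 H2. rewrite Rabs_mult in *. pose proof (Rabs_pos lam). nra. Qed.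

Lemma PS_derive_a lam k : PS_derive (acoef lam) k = acoef lam k - lam * bcoef lam 1 k.
Proof.
  unfold PS_derive, bcoef, acoef. simpl fall_one.
  change (Factorial.fact (S k)) with (S k * Factorial.fact k)%nat; rewrite mult_INR.
  pose proof (fact_pos k). rewrite S_INR. pose proof (pos_INR k). simpl. field. lra.
Qed.

Lemma e_lam_pos lam z : 0 < e_lam lam z.
Proof. unfold e_lam, Rpower. apply exp_pos. Qed.

Lemma dS lam z : lam <> 0 -> Rabs (lam * z) < 1 ->
  is_derive (PSeries (acoef lam)) z (PSeries (acoef lam) z / (1 + lam * z)).
Proof.
  intros Hl Hz.
  assert (Hr := radius lam z Hl Hz).
  assert (Hd := is_derive_PSeries _ _ Hr).
  set (D := PSeries (PS_derive (acoef lam)) z) in Hd.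
  assert (E1 : D = PSeries (acoef lam) z - lam * PSeries (bcoef lam 1) z).
  { unfold D. rewrite <- PSeries_scal, <- PSeries_minus.
    - apply PSeries_ext. intros k. rewrite PS_derive_a. reflexivity.
    - apply CV_radius_inside; auto.
    - apply CV_radius_inside. rewrite CV_radius_scal, radius_b; auto. }
  assert (E2 : PSeries (bcoef lam 1) z = z * D).
  { rewrite <- PS_b_S. unfold D. f_equal. apply PSeries_ext. intros k.
    unfold PS_derive, bcoef. simpl. ring. }
  assert (Hp := disk_pos lam z Hz).
  replace (PSeries (acoef lam) z / (1 + lam * z)) with D; auto.
  rewrite E2 in E1. field_simplify_eq; [|lra]. lra.
Qed.

Lemma de lam z : lam <> 0 -> Rabs (lam * z) < 1 ->
  is_derive (e_lam lam) z (e_lam lam z / (1 + lam * z)).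
Proof.
  intros Hl Hz. assert (Hp := disk_pos lam z Hz).
  unfold e_lam, Rpower. auto_derive.
  - exact Hp.
  - field. lra.
Qed.

Lemma binom lam y : lam <> 0 -> Rabs (lam * y) < 1 ->
  PSeries (acoef lam) y = e_lam lam y.
Proof.
  intros Hl Hy.
  set (H := fun z => PSeries (acoef lam) z / e_lam lam z).
  assert (HD : forall z, Rabs (lam * z) < 1 -> is_derive H z 0).
  { intros z Hz. unfold H.
    assert (Hp := disk_pos lam z Hz). assert (He := e_lam_pos lam z).
    replace 0 with ((PSeries (acoef lam) z / (1 + lam * z) * e_lam lam z -
       PSeries (acoef lam) z * (e_lam lam z / (1 + lam * z))) / e_lam lam z ^ 2)
      by (field; lra).
    apply is_derive_div; [apply dS|apply de|]; auto; lra. }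
  destruct (MVT_gen H 0 y (fun _ => 0)) as [c [_ Hc]].
  - intros z Hz. apply HD. apply disk_le with y; auto. apply between_abs; lra.
  - intros z Hz. apply continuity_pt_filterlim. apply (ex_derive_continuous (V := R_NormedModule) H).
    eexists. apply HD. apply disk_le with y; auto. apply between_abs; lra.
  - assert (H0 : H 0 = 1).
    { unfold H. rewrite PSeries_0. unfold e_lam, Rpower, acoef. simpl.
      rewrite Rmult_0_r, Rplus_0_r, ln_1, Rmult_0_r, exp_0. field. }
    assert (Hy' : H y = 1) by lra.
    unfold H in Hy'. pose proof (e_lam_pos lam y).
    apply (Rmult_eq_reg_r (/ e_lam lam y)). rewrite Rinv_r by lra. exact Hy'.
    apply Rgt_not_eq, Rinv_0_lt_compat; lra.
Qed.

Lemma xD lam n : lam <> 0 -> forall y, Rabs (lam * y) < 1 ->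
  xD_pow n (e_lam lam) y = PSeries (bcoef lam n) y.
Proof.
  intros Hl. induction n as [|n IH]; intros y Hy.
  - simpl. rewrite <- binom; auto. apply PSeries_ext; intros; unfold bcoef; simpl; ring.
  - simpl. rewrite (Derive_ext_loc _ (PSeries (bcoef lam n))).
    + rewrite Derive_PSeries. apply PS_b_S. rewrite radius_b; apply radius; auto.
    + apply filter_imp with (2 := loc_disk lam y Hy). intros t Ht; apply IH; auto.
Qed.

Lemma beln lam x n : lam <> 0 -> forall t, Rabs (lam * (x * exp t)) < 1 ->
  Derive_n (fun t => e_lam lam (x * exp t) / e_lam lam x) n t
  = PSeries (bcoef lam n) (x * exp t) / e_lam lam x.
Proof.
  intros Hl. induction n as [|n IH]; intros t Ht.
  - simpl. rewrite <- binom; auto. f_equal. apply PSeries_ext; intros; unfold bcoef; simpl; ring.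
  - simpl. rewrite (Derive_ext_loc _ (fun s => PSeries (bcoef lam n) (x * exp s) / e_lam lam x)).
    + apply is_derive_unique.
      assert (Hd1 : is_derive (fun s => PSeries (bcoef lam n) (x * exp s)) t
                     (x * exp t * PSeries (PS_derive (bcoef lam n)) (x * exp t))).
      { apply (is_derive_comp (PSeries (bcoef lam n)) (fun s => x * exp s)).
        - apply is_derive_PSeries. rewrite radius_b; apply radius; auto.
        - auto_derive; auto. ring. }
      rewrite PS_b_S in Hd1.
      apply is_derive_ext with (fun s => PSeries (bcoef lam n) (x * exp s) * / e_lam lam x).
      { intros; reflexivity. }
      apply (is_derive_scal_l (V := R_NormedModule) _ _ _ (/ e_lam lam x) Hd1).
    + set (g := fun s => lam * (x * exp s)).
      assert (Hc : filterlim g (locally t) (locally (g t))).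
      { apply (ex_derive_continuous (V := R_NormedModule) g). unfold g. auto_derive; auto. }
      assert (Hl1 : locally (g t) (fun z => Rabs (1 * z) < 1)).
      { apply loc_disk. rewrite Rmult_1_l. exact Ht. }
      specialize (Hc _ Hl1). simpl in Hc.
      apply (filter_imp (fun s => Rabs (1 * g s) < 1)); [|exact Hc]. intros s Hs. apply IH. unfold g in Hs. rewrite Rmult_1_l in Hs. exact Hs.
Qed.

Theorem theorem5 (lam : R) (n : nat) (x : R) :
  lam <> 0 -> Rabs (lam * x) < 1 ->
  bel n lam x * e_lam lam x = xD_pow n (e_lam lam) x /\
  is_series (fun k => fall_one lam k / INR (Factorial.fact k) * INR k ^ n * x ^ k)
            (xD_pow n (e_lam lam) x).
Proof.
  intros Hl Hx. rewrite (xD lam n Hl x Hx). split.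
  - unfold bel. rewrite beln; auto.
    + rewrite exp_0, Rmult_1_r. pose proof (e_lam_pos lam x). field. lra.
    + rewrite exp_0, Rmult_1_r. exact Hx.
  - apply is_series_ext with (fun k => bcoef lam n k * x ^ k).
    { intros k. reflexivity. }
    apply (proj1 (is_pseries_R _ _ _)). apply PSeries_correct. apply CV_radius_inside.
    rewrite radius_b. apply radius; auto.
Qed.
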